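(* Let $G=(V,E)$ be a graph with colouring $f:V\to\{B,R\}$ and let $E'$ be an optimal solution to the MIRE problem on $(G,f)$. Then for every blue node $v$, exactly $\max(r(v)-b(v),0)$ edges of $E\setminus E'$ are incident to $v$, where $r(v),b(v)$ are the numbers of red and blue neighbours of $v$ in $G$.
   Context: Graphs are finite, simple and undirected. A colouring $f:V\to\{B,R\}$ partitions $V$ into the blue nodes $B=f^{-1}(B)$ and red nodes $R=f^{-1}(R)$. For an edge set $E'$ on $V$ and $v\in V$, let $b_{E'}(v)$ and $r_{E'}(v)$ be the numbers of blue and red neighbours of $v$ in $(V,E')$; write $b(v)=b_E(v)$, $r(v)=r_E(v)$. A node $v$ is under (majority) illusion in $(V,E')$ if $r_{E'}(v)>b_{E'}(v)$. Standing assumption: $|B|>|R|$. An optimal solution to MIRE is an edge set $E'\subseteq E$ such that no node is under illusion in $(V,E')$ and $|E\setminus E'|$ is minimum among all such sets. *)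

(* Defs.v *)
From HB Require Import structures.
From mathcomp Require Import all_boot.
Set Implicit Arguments. Unset Strict Implicit. Unset Printing Implicit Defensive.

(* Vertices: a finType T. An edge set is a set of 2-element subsets of T
   (finite, simple, undirected graph). A colouring is col : T -> colour. *)
Inductive colour := Blue | Red.
Definition colour_eqb (a b : colour) : bool :=
  match a, b with Blue, Blue | Red, Red => true | _, _ => false end.
Lemma colour_eqP : Equality.axiom colour_eqb.
Proof. by case; case; constructor. Qed.
HB.instance Definition _ := hasDecEq.Build colour colour_eqP.

Definition is_simple_edges (T : finType) (E : {set {set T}}) : Prop :=
  forall e, e \in E -> #|e| = 2.

Definition nbrs (T : finType) (E' : {set {set T}}) (v : T) : {set T} :=
  [set u | (u != v) && ([set u; v] \in E')].

Definition bcount (T : finType) (f : T -> colour) (E' : {set {set T}}) (v : T) : nat :=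
  #|[set u in nbrs E' v | f u == Blue]|.
Definition rcount (T : finType) (f : T -> colour) (E' : {set {set T}}) (v : T) : nat :=
  #|[set u in nbrs E' v | f u == Red]|.

Definition under_illusion (T : finType) (f : T -> colour) (E' : {set {set T}}) (v : T) : bool :=
  bcount f E' v < rcount f E' v.

Definition feasible (T : finType) (f : T -> colour) (E E' : {set {set T}}) : Prop :=
  E' \subset E /\ forall v, ~~ under_illusion f E' v.

Definition optimal_MIRE (T : finType) (f : T -> colour) (E E' : {set {set T}}) : Prop :=
  feasible f E E' /\
  forall E'', feasible f E E'' -> #|E :\: E'| <= #|E :\: E''|.

Definition more_blue (T : finType) (f : T -> colour) : Prop :=
  #|[set v | f v == Red]| < #|[set v | f v == Blue]|.

(* Main.v *)
Require Import Defs.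
From mathcomp Require Import all_boot.
From mathcomp Require Import zify.

Section Aux.
Variable T : finType.
Implicit Types (E : {set {set T}}) (f : T -> colour).

Lemma nbrsU1 E (e : {set T}) w x :
  (x \in nbrs (e |: E) w) = (x \in nbrs E w) || ((x != w) && ([set x; w] == e)).
Proof.
rewrite !inE; case: (x != w) => //=; case: ([set x; w] == e) => //=.
by rewrite orbT. by rewrite orbF.
Qed.

Lemma nbrs_sub E1 E2 w : E1 \subset E2 -> nbrs E1 w \subset nbrs E2 w.
Proof.
move=> s; apply/subsetP => x; rewrite !inE => /andP[-> h] /=.
exact: (subsetP s).
Qed.

Lemma card_rem E E' (e : {set T}) : e \in E :\: E' ->
  #|E :\: (e |: E')| < #|E :\: E'|.
Proof.
move=> he; rewrite (cardsD1 e (E :\: E')) he.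
have -> : E :\: (e |: E') = (E :\: E') :\ e.
  apply/setP => x; rewrite !inE.
  by case: (x == e); case: (x \in E); case: (x \in E').
by [].
Qed.

Lemma mono_ok f E1 E2 w :
  [set x in nbrs E2 w | f x == Red] \subset [set x in nbrs E1 w | f x == Red] ->
  [set x in nbrs E1 w | f x == Blue] \subset [set x in nbrs E2 w | f x == Blue] ->
  ~~ under_illusion f E1 w -> ~~ under_illusion f E2 w.
Proof.
rewrite /under_illusion /bcount /rcount -!leqNgt => h1 h2 h.
apply: leq_trans (subset_leq_card h1) _.
by apply: leq_trans h (subset_leq_card h2).
Qed.

Lemma pair_mem (x w u v : T) : [set x; w] = [set u; v] -> (x == u) || (x == v).
Proof.
move=> h; have : x \in [set x; w] by rewrite !inE eqxx.
by rewrite h !inE.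
Qed.

Lemma pair_mem2 (x w u v : T) : [set x; w] = [set u; v] -> (w == u) || (w == v).
Proof.
move=> h; have : w \in [set x; w] by rewrite !inE eqxx orbT.
by rewrite h !inE.
Qed.

End Aux.

Theorem mainTheorem4 (T : finType) (E E' : {set {set T}}) (f : T -> colour) :
  is_simple_edges E ->
  more_blue f ->
  optimal_MIRE f E E' ->
  forall v : T, f v = Blue ->
    #|[set e in E :\: E' | v \in e]| = maxn (rcount f E v - bcount f E v) 0.
Proof.
move=> simp _ [[sub feas] opt] v fv.
pose D := [set u in nbrs E v | u \notin nbrs E' v].
have inD u : (u \in D) = [&& u != v, [set u; v] \in E & [set u; v] \notin E'].
  by rewrite !inE; case: (u != v).
have infeas u : u \in D -> ~ feasible f E ([set u; v] |: E').
  move=> uD hF; have := opt _ hF; rewrite leqNgt; move/negP; apply.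
  apply: card_rem; move: uD; rewrite inD => /and3P[_ ? ?]; by rewrite inE; apply/andP.
have subU u : u \in D -> [set u; v] |: E' \subset E.
  move=> uD; apply/subsetP => e; rewrite !inE => /orP[/eqP -> | ]; last exact: (subsetP sub).
  by move: uD; rewrite inD => /and3P[].
have Dred u : u \in D -> f u = Red.
  move=> uD; case fu: (f u) => //; exfalso; apply: (infeas u uD); split; first exact: subU.
  move=> w; apply: mono_ok (feas w).
    apply/subsetP => x; rewrite inE nbrsU1 => /andP[/orP[h|/andP[_ /eqP h]] r].
      by rewrite inE h r.
    by case/orP: (pair_mem _ _ _ _ _ h) => /eqP ex; move: r; rewrite ex ?fu ?fv.
  apply/subsetP => x; rewrite inE [in X in _ -> X]inE nbrsU1 => /andP[-> ->].
  by [].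
have tight u : u \in D -> bcount f E' v <= rcount f E' v.
  move=> uD; set E'' := [set u; v] |: E'.
  have hb : bcount f E' v <= bcount f E'' v.
    apply: subset_leq_card; apply/subsetP => x; rewrite inE [in X in _ -> X]inE nbrsU1 => /andP[-> ->].
    by [].
  have hr : rcount f E'' v <= (rcount f E' v).+1.
    apply: leq_trans (_ : #|u |: [set x in nbrs E' v | f x == Red]| <= _).
      apply: subset_leq_card; apply/subsetP => x; rewrite inE nbrsU1 => /andP[/orP[h|/andP[_ /eqP h]] r].
        by rewrite in_setU1 inE h r orbT.
      case/orP: (pair_mem _ _ _ _ _ h) => /eqP ex; first by rewrite ex !inE eqxx.
      by move: r; rewrite ex fv.
    by rewrite cardsU1; case: (u \notin _).
  case ill: (under_illusion f E'' v).
    move: ill; rewrite /under_illusion => ill.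
    have := leq_trans ill hr; rewrite ltnS => h.
    exact: leq_trans hb h.
  exfalso; apply: (infeas u uD); split; first exact: subU.
  move=> w; case: (eqVneq w v) => [->|wv]; first by rewrite ill.
  apply: mono_ok (feas w).
    apply/subsetP => x; rewrite inE nbrsU1 => /andP[/orP[h|/andP[xw /eqP h]] r].
      by rewrite inE h r.
    case/orP: (pair_mem _ _ _ _ _ h) => /eqP ex; last by move: r; rewrite ex fv.
    case/orP: (pair_mem2 _ _ _ _ _ h) => /eqP ew; last by rewrite ew eqxx in wv.
    by rewrite ex ew eqxx in xw.
  apply/subsetP => x; rewrite inE [in X in _ -> X]inE nbrsU1 => /andP[-> ->].
  by [].
have nsub := @nbrs_sub T E' E v sub.
have hbE : bcount f E v = bcount f E' v.
  rewrite /bcount; apply: eq_card => x; rewrite !inE.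
  case fx: (f x); rewrite ?andbT ?andbF //.
  case: (eqVneq x v) => //= xv.
  apply/idP/idP => [h|h]; last exact: (subsetP sub).
  apply/negPn/negP => h'; have xD : x \in D by rewrite inD xv h h'.
  by move: (Dred x xD); rewrite fx.
have hrE : rcount f E v = rcount f E' v + #|D|.
  rewrite /rcount -(cardsID (nbrs E' v)); congr (_ + _); apply: eq_card => x; rewrite !inE.
    case: (eqVneq x v) => //= xv; rewrite ?andbF //.
    case h: ([set x; v] \in E'); rewrite ?andbF //= (subsetP sub _ h).
    by rewrite andbC.
  case: (eqVneq x v) => //= xv.
  case h: ([set x; v] \in E'); rewrite /= ?andbF ?andbT //.
  case h1: ([set x; v] \in E) => //=.
  have xD : x \in D by rewrite inD xv h h1.
  by rewrite (Dred x xD).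
have hinc : #|[set e in E :\: E' | v \in e]| = #|D|.
  rewrite -(card_in_imset (f := fun u => [set u; v])); last first.
    move=> u1 u2 h1 _ /= h.
    have : u1 \in [set u2; v] by rewrite -h !inE eqxx.
    rewrite !inE => /orP[/eqP //|/eqP e1].
    by move: h1; rewrite inD e1 eqxx.
  apply: eq_card => e; rewrite !inE.
  apply/idP/idP.
    move=> /andP[/andP[nE' eE] ve].
    have := simp e eE; move/eqP/cards2P => [x [y [xy ee]]].
    move: ve; rewrite ee !inE => /orP[/eqP xv|/eqP yv].
      apply/imsetP; exists y; last by rewrite xv setUC.
      by rewrite inD xv eq_sym xy /= setUC -ee eE nE'.
    apply/imsetP; exists x; last by rewrite yv.
    by rewrite inD yv xy -ee eE nE'.
  move=> /imsetP[u uD ->]; move: uD; rewrite inD => /and3P[_ h1 h2].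
  by rewrite h1 h2 !inE eqxx orbT.
rewrite hinc.
have fv' := feas v; move: fv'; rewrite /under_illusion -leqNgt => fv'.
case: (set_0Vmem D) => [D0|[u uD]].
  rewrite D0 cards0 in hrE *; lia.
have := tight u uD; have : 0 < #|D| by apply/card_gt0P; exists u.
lia.
Qed.
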